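(* With the notation below: (i) For each $H\in C_p$ there is a unique map $\chi_H:H\to H_p/(p-1)H_p\simeq\mathbb{Z}/(p-1)\mathbb{Z}$ such that $\chi_H=\chi\circ\lambda^{-1}$ (i.e. $\chi_H(x)=\chi(\lambda^{-1}x)$) for every $\lambda\in\mathbb{R}_+^*$ with $H=\lambda H_p$. (ii) The subgroup $\mathcal P$ of principal divisors is contained in the kernel of the group homomorphism $\chi:\mathrm{Div}(C_p)\to\mathbb{Z}/(p-1)\mathbb{Z}$, $\chi(D)=\sum_H\chi_H(D(H))$.
   Context: Let $p$ be a prime and $H_p=\mathbb{Z}[1/p]\subset\mathbb{Q}$. The ring homomorphism $\chi:H_p\to\mathbb{Z}/(p-1)\mathbb{Z}$ is $\chi(a/p^n)=a\bmod(p-1)$ ($a\in\mathbb{Z}$, $n\in\mathbb{N}$); its kernel is $(p-1)H_p$. $C_p$ is the set of subgroups $H=\lambda H_p\subset\mathbb{R}$, $\lambda>0$. $\mathcal K(C_p)$: continuous piecewise affine functions $f:(0,\infty)\to\mathbb{R}$ with slopes in $H_p$ and $f(p\lambda)=f(\lambda)$ (plus the constant $-\infty$). For real-valued $f$ and $H=\lambda H_p$, $\mathrm{Ord}_H(f)=h_+-h_-$ with $h_\pm=\lim_{\epsilon\to0\pm}(f((1+\epsilon)\lambda)-f(\lambda))/\epsilon\in H$. A divisor $D$ on $C_p$ assigns $D(H)\in H$ to each $H\in C_p$, zero for all but finitely many $H$; $\mathrm{Div}(C_p)$ is the group of divisors under pointwise addition; the principal divisor of real-valued $f\in\mathcal K(C_p)$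 is $(f)(H)=\mathrm{Ord}_H(f)$, and $\mathcal P$ is the subgroup of principal divisors. *)

(* Defs.v *)
From HB Require Import structures.
From mathcomp Require Import all_boot all_order all_algebra.
From mathcomp Require Import all_classical all_reals all_analysis.
Set Implicit Arguments. Unset Strict Implicit. Unset Printing Implicit Defensive.
Import Order.TTheory GRing.Theory Num.Theory.
Import numFieldNormedType.Exports.
Local Open Scope classical_set_scope.
Local Open Scope ring_scope.

Section Defs.
Variable R : realType.
Variable p : nat.

Definition Hp : set R := [set x | exists (a : int) (n : nat), x = a%:~R / (p%:R ^+ n)].

Definition scaledHp (l : R) : set R := [set l * y | y in Hp].

Definition Cp : set (set R) := [set H | exists l : R, 0 < l /\ H = scaledHp l].

(* chi : H_p -> Z/(p-1)Z, chi(a/p^n) = a mod (p-1); the class is represented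
   by its canonical residue (a %% (p-1))%Z in [0, p-1) (an int).
   Outside H_p the value is junk (0). *)
Definition chi (x : R) : int :=
  match pselect (exists an : int * nat, x = an.1%:~R / (p%:R ^+ an.2)) with
  | left h => ((projT1 (cid h)).1 %% (p.-1)%:Z)%Z
  | right _ => 0%Z
  end.

Definition lamH (H : set R) : R :=
  match pselect (exists l : R, 0 < l /\ H = scaledHp l) with
  | left h => projT1 (cid h)
  | right _ => 1
  end.

(* chi_H(x) = chi(lambda^-1 x) for (a chosen) lambda with H = lambda H_p;
   by part (i) of the proposition this does not depend on the choice. *)
Definition chiH (H : set R) (x : R) : int := chi ((lamH H)^-1 * x).

Definition is_divisor (D : set R -> R) : Prop :=
  (forall H, Cp H -> H (D H)) /\
  (forall H, ~ Cp H -> D H = 0) /\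
  finite_set [set H | D H != 0].

(* chi(D) = sum_H chi_H(D(H)), as an integer; its class mod (p-1) is the
   value in Z/(p-1)Z. *)
Definition chiDiv (D : set R -> R) : int :=
  (\sum_(H \in [set H | D H != 0]) chiH H (D H))%R.

Definition piecewise_affine_Hp (f : R -> R) : Prop :=
  forall a b : R, 0 < a -> a <= b ->
    exists (k : nat) (t : nat -> R),
      t 0%N = a /\ t k = b /\
      (forall i, (i < k)%N -> t i < t i.+1) /\
      (forall i, (i < k)%N -> exists c d : R, Hp c /\
         forall x, t i <= x <= t i.+1 -> f x = c * x + d).

(* real-valued elements of K(C_p) (the constant -oo is excluded) *)
Definition inK (f : R -> R) : Prop :=
  (forall x : R, 0 < x -> {for x, continuous f}) /\
  piecewise_affine_Hp f /\
  (forall x : R, 0 < x -> f (p%:R * x) = f x).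

(* Ord_H(f) = h_+ - h_-, computed at lambda with H = lambda H_p *)
Definition Ord (f : R -> R) (l : R) : R :=
  lim ((fun e : R => (f ((1 + e) * l) - f l) / e) @ 0^'+) -
  lim ((fun e : R => (f ((1 + e) * l) - f l) / e) @ 0^'-).

Definition principal_div (f : R -> R) : set R -> R :=
  fun H => if `[< Cp H >] then Ord f (lamH H) else 0.

End Defs.

(* Main.v *)
Require Import Defs.
From HB Require Import structures.
From mathcomp Require Import all_boot all_order all_algebra.
From mathcomp Require Import all_classical all_reals all_analysis.
Import Order.TTheory GRing.Theory Num.Theory.
Local Open Scope classical_set_scope.
Local Open Scope ring_scope.

From mathcomp Require Import ring lra.
Import numFieldNormedType.Exports.

Section S.
Variable R : realType.
Variable p : nat.
Hypothesis hp : prime p.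

Let d : int := (p.-1)%:Z.
Let P : R := p%:R.

Lemma P_gt0 : 0 < P.
Proof. by rewrite /P ltr0n prime_gt0. Qed.
Lemma P_gt1 : 1 < P.
Proof. by rewrite /P ltr1n prime_gt1. Qed.
Lemma PX_neq0 n : P ^+ n != 0.
Proof. by rewrite expf_neq0 // gt_eqF // P_gt0. Qed.
Lemma PX_gt0 n : 0 < P ^+ n.
Proof. by rewrite exprn_gt0 // P_gt0. Qed.

Lemma pmod1 m : ((p%:Z ^+ m) %% d)%Z = (1 %% d)%Z.
Proof.
elim: m => [//|m IH]; rewrite exprS -modzMmr IH modzMmr mulr1.
have -> : p%:Z = d + 1 by rewrite /d -PoszD addn1 prednK ?prime_gt0.
by rewrite modzDl.
Qed.

Lemma modpX a m : ((a * p%:Z ^+ m) %% d)%Z = (a %% d)%Z.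
Proof. by rewrite -modzMmr pmod1 modzMmr mulr1. Qed.

Lemma intPX m : ((p%:Z ^+ m)%:~R : R) = P ^+ m.
Proof. by rewrite rmorphXn /= /P. Qed.

Lemma chiE {x : R} {a : int} {n : nat} : x = a%:~R / P ^+ n -> chi p x = (a %% d)%Z.
Proof.
move=> hx; rewrite /chi; case: pselect => [h|nh]; last first.
  by exfalso; apply: nh; exists (a, n).
case: (cid h) => [[b m]] /= hb.
have e : a * p%:Z ^+ m = b * p%:Z ^+ n.
  apply: (@intr_inj R).
  rewrite !rmorphM /= !intPX.
  move: hb; rewrite hx => /(congr1 (fun y => y * P ^+ n * P ^+ m)).
  rewrite !mulfVK ?PX_neq0 // => ->.
  by rewrite -mulrA [_ * P ^+ m]mulrC mulrA mulfVK ?PX_neq0.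
by rewrite -/d -(modpX b n) -e modpX.
Qed.


Lemma chi0 : chi p (0:R) = 0.
Proof. by rewrite (@chiE (0:R) 0 0%N) ?mul0r // mod0z. Qed.

Lemma HpE (x : R) : Hp p x -> exists (a : int) n, x = a%:~R / P ^+ n.
Proof. by []. Qed.

Lemma Hp_add (x y : R) : Hp p x -> Hp p y -> Hp p (x + y) /\
  chi p (x + y) = ((chi p x + chi p y) %% d)%Z.
Proof.
move=> [a [n ->]] [b [m ->]].
have E : a%:~R / P ^+ n + b%:~R / P ^+ m =
   (a * p%:Z ^+ m + b * p%:Z ^+ n)%:~R / P ^+ (n + m) :> R.
  rewrite rmorphD !rmorphM /= !intPX exprD.
  by field; rewrite !PX_neq0.
split; first by exists (a * p%:Z ^+ m + b * p%:Z ^+ n), (n + m)%N.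
by rewrite (chiE E) (chiE (erefl _)) (chiE (erefl _)) modzDm -[LHS]modzDm !modpX modzDm.
Qed.

Lemma Hp_scale (x : R) n m : Hp p x -> Hp p (P ^+ n / P ^+ m * x) /\
  chi p (P ^+ n / P ^+ m * x) = chi p x.
Proof.
move=> [a [k ->]].
have E : P ^+ n / P ^+ m * (a%:~R / P ^+ k) =
   (a * p%:Z ^+ n)%:~R / P ^+ (m + k) :> R.
  rewrite !rmorphM /= !intPX exprD.
  by field; rewrite !PX_neq0.
split; first by exists (a * p%:Z ^+ n), (m + k)%N.
by rewrite (chiE E) (chiE (erefl _)) modpX.
Qed.

Lemma Hp_opp (x : R) : Hp p x -> Hp p (- x).
Proof. move=> [a [k ->]]; exists (- a), k; by rewrite rmorphN mulNr. Qed.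

Lemma Hp_mulP (x : R) : Hp p x -> Hp p (P * x).
Proof. move=> [a [k ->]]; exists (a * p%:Z), k; by rewrite rmorphM /= mulrA [P * _]mulrC. Qed.

Lemma chi_mod (x : R) : ((chi p x) %% d)%Z = chi p x.
Proof. rewrite /chi; case: pselect => [h|h]; [exact: modz_mod | by rewrite mod0z]. Qed.

Lemma chi_1mP (c : R) : Hp p c -> chi p ((1 - P) * c) = 0.
Proof.
move=> [a [k ->]].
have E : (1 - P) * (a%:~R / P ^+ k) = (a * (- d))%:~R / P ^+ k :> R.
  rewrite !rmorphM /= rmorphN /= /d.
  have -> : ((p.-1)%:Z)%:~R = P - 1 :> R.
    by rewrite /P -{2}(prednK (prime_gt0 hp)) -addn1 natrD addrK.
  by rewrite mulrA; congr (_ * _); rewrite mulrC; ring.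
by rewrite (chiE E) mulrN -mulNr modzMl.
Qed.


Lemma Hp1 : Hp p (1 : R).
Proof. by exists 1, 0%N; rewrite expr0 divr1. Qed.

Lemma scaled_self (l : R) : scaledHp p l l.
Proof. by exists 1; [exact: Hp1 | rewrite mulr1]. Qed.

Lemma scaled_rel (l l' : R) : 0 < l -> 0 < l' -> scaledHp p l = scaledHp p l' ->
  exists n m, l * P ^+ n = l' * P ^+ m.
Proof.
move=> l0 l'0 E.
have : scaledHp p l l' by rewrite E; exact: scaled_self.
case=> y [a [n ->]] ey.
have : scaledHp p l' l by rewrite -E; exact: scaled_self.
case=> z [b [m ->]] ez.
rewrite -/P in ey ez.
have ab : (a * b)%:~R = P ^+ (n + m) :> R.
  have h : (a%:~R / P ^+ n) * (b%:~R / P ^+ m) = 1.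
    by apply: (mulfI (lt0r_neq0 l0)); rewrite mulr1 [X in X = _]mulrA ey ez.
  rewrite rmorphM /= exprD.
  have -> : a%:~R * b%:~R = (a%:~R / P ^+ n * (b%:~R / P ^+ m)) * (P ^+ n * P ^+ m) :> R.
    by field; rewrite !PX_neq0.
  by rewrite h mul1r.
have a0 : 0 < a.
  have : 0 < a%:~R / P ^+ n :> R.
    by rewrite -(pmulr_rgt0 _ l0) ey.
  by rewrite pmulr_lgt0 ?invr_gt0 ?PX_gt0 // ltr0z.
case: a a0 ab ey => [a'|//] a0 ab ey.
have b0 : 0 < b.
  have : 0 < (Posz a' * b)%:~R :> R by rewrite ab PX_gt0.
  by rewrite ltr0z pmulr_rgt0.
case: b b0 ab ez => [b'|//] b0 ab ez.
have : (a' * b')%N = (p ^ (n + m))%N.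
  have h : ((a' * b')%N%:R : R) = (p ^ (n + m))%N%:R.
    by rewrite natrM natrX -ab rmorphM.
  by move/eqP: h; rewrite eqr_nat => /eqP.
move=> e.
have : (a' %| p ^ (n + m))%N by rewrite -e dvdn_mulr.
case/(dvdn_pfactor _ _ hp) => j _ aj.
exists j, n; rewrite -ey aj /=.
have -> : ((p ^ j)%N%:~R : R) = P ^+ j by rewrite /P -natrX.
by rewrite mulrA mulfVK ?PX_neq0.
Qed.

Lemma scaled_sub (l l' : R) n m : l' != 0 -> l * P ^+ n = l' * P ^+ m ->
  scaledHp p l `<=` scaledHp p l'.
Proof.
move=> l'0 e x [y hy <-].
exists (P ^+ m / P ^+ n * y); first by case: (Hp_scale _ m n hy).
have -> : l = l' * P ^+ m / P ^+ n by rewrite -e mulfK ?PX_neq0.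
by field; rewrite !PX_neq0.
Qed.

Arguments scaled_sub {l l' n m}.
Arguments scaled_rel {l l'}.

Lemma scaled_eq (l l' : R) n m : 0 < l -> 0 < l' -> l * P ^+ n = l' * P ^+ m ->
  scaledHp p l = scaledHp p l'.
Proof.
move=> l0 l'0 e; apply/seteqP; split; first exact: (scaled_sub (lt0r_neq0 l'0) e).
exact: (scaled_sub (lt0r_neq0 l0) (esym e)).
Qed.

Lemma chi_transfer (l l' x : R) : 0 < l -> 0 < l' -> scaledHp p l = scaledHp p l' ->
  scaledHp p l x -> chi p (l^-1 * x) = chi p (l'^-1 * x).
Proof.
move=> l0 l'0 E [y hy <-].
case: (scaled_rel l0 l'0 E) => n [m e].
have -> : l'^-1 * (l * y) = P ^+ m / P ^+ n * y.
  have -> : l' = l * P ^+ n / P ^+ m by rewrite e mulfK ?PX_neq0.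
  by field; rewrite !PX_neq0 ?gt_eqF.
by rewrite (Hp_scale _ _ _ hy).2 mulKf ?gt_eqF.
Qed.

Lemma lamH_spec (H : set R) : Cp p H -> 0 < lamH p H /\ H = scaledHp p (lamH p H).
Proof.
move=> hH; rewrite /lamH; case: pselect => [h|//].
by case: (cid h).
Qed.


Definition Qd (f : R -> R) (l e : R) := (f ((1 + e) * l) - f l) / e.

Lemma right_cvg (f : R -> R) (l c dd del : R) : 0 < l -> 0 < del ->
  (forall y, l <= y <= l + del -> f y = c * y + dd) ->
  Qd f l e @[e --> 0^'+] --> c * l.
Proof.
move=> l0 d0 hf; apply: cvg_near_cst.
have dl : 0 < del / l by rewrite divr_gt0.
near=> e.
have e0 : 0 < e by near: e; exact: nbhs_right_gt.
have e1 : e < del / l by near: e; exact: nbhs_right_lt.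
have el : e * l < del by rewrite -ltr_pdivlMr.
have el0 : 0 < e * l by rewrite mulr_gt0.
rewrite /Qd !hf; first (by field; rewrite lt0r_neq0); apply/andP; split; lra.
Unshelve. all: by end_near.
Qed.

Lemma left_cvg (f : R -> R) (l c dd del : R) : 0 < l -> 0 < del ->
  (forall y, l - del <= y <= l -> f y = c * y + dd) ->
  Qd f l e @[e --> 0^'-] --> c * l.
Proof.
move=> l0 d0 hf; apply: cvg_near_cst.
have dl : 0 < del / l by rewrite divr_gt0.
near=> e.
have e0 : e < 0 by near: e; exact: nbhs_left_lt.
have e1 : - (del / l) < e by near: e; apply: nbhs_left_gt; rewrite oppr_lt0.
have el : - del < e * l by rewrite -ltr_pdivrMr // mulNr.
have el0 : e * l < 0 by rewrite pmulr_llt0.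
rewrite /Qd !hf; first (by field; rewrite ltr0_neq0); apply/andP; split; lra.
Unshelve. all: by end_near.
Qed.

Lemma Ord_val (f : R -> R) (l a b : R) :
  Qd f l e @[e --> 0^'+] --> a -> Qd f l e @[e --> 0^'-] --> b ->
  Ord f l = a - b.
Proof.
move=> ha hb; rewrite /Ord.
by rewrite (cvg_lim _ ha) ?(cvg_lim _ hb).
Qed.


Lemma perX (f : R -> R) : inK p f -> forall n (x : R), 0 < x -> f (P ^+ n * x) = f x.
Proof.
move=> [_ [_ hper]]; elim=> [|n IH] x x0; first by rewrite expr0 mul1r.
by rewrite exprS -mulrA hper ?IH // mulr_gt0 // PX_gt0.
Qed.

Arguments perX {f}.

Lemma Qd_scale (f : R -> R) (l l' : R) n m : inK p f -> 0 < l -> 0 < l' ->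
  l * P ^+ n = l' * P ^+ m -> forall e, -1 < e -> Qd f l e = Qd f l' e.
Proof.
move=> hf l0 l'0 e x x1.
have x0 : 0 < 1 + x by rewrite -ltrBlDl sub0r.
rewrite /Qd -(perX hf n _ (mulr_gt0 x0 l0)) -(perX hf m _ (mulr_gt0 x0 l'0)).
rewrite -(perX hf n _ l0) -(perX hf m _ l'0).
have e1 : P ^+ n * l = P ^+ m * l' by rewrite mulrC e mulrC.
by rewrite mulrCA e1 mulrCA.
Qed.

Arguments Qd_scale {f l l' n m}.

Lemma lim_near_eq (F : set_system R) (g h : R -> R) : Filter F ->
  {near F, g =1 h} -> lim (g @ F) = lim (h @ F).
Proof.
move=> FF gh; congr lim; apply/seteqP; split.
- by apply: near_eq_cvg; near=> x; rewrite (near gh x).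
- apply: near_eq_cvg; near=> x; by rewrite (near gh x).
Unshelve. all: by end_near.
Qed.

Lemma Ord_scale (f : R -> R) (l l' : R) n m : inK p f -> 0 < l -> 0 < l' ->
  l * P ^+ n = l' * P ^+ m -> Ord f l = Ord f l'.
Proof.
move=> hf l0 l'0 e; rewrite /Ord.
have := Qd_scale hf l0 l'0 e => hq.
congr (_ - _); apply: lim_near_eq.
- near=> x; apply: hq.
  have : 0 < x by near: x; exact: nbhs_right_gt.
  lra.
- near=> x; apply: hq.
  near: x; apply: nbhs_left_gt; lra.
Unshelve. all: by end_near.
Qed.

Arguments Ord_scale {f l l' n m}.


Lemma PX_ge n : (n%:R : R) <= P ^+ n.
Proof. by rewrite /P -natrX ler_nat ltnW // ltn_expl // prime_gt1. Qed.

Lemma reduce (l : R) : 0 < l -> exists n m (l' : R),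
  1 <= l' < P /\ l * P ^+ n = l' * P ^+ m.
Proof.
move=> l0.
pose N := Num.Def.archi_bound (l^-1).
have hN : l^-1 < N%:R by apply: archi_boundP; rewrite invr_ge0 ltW.
set mu := l * P ^+ N.
have mu1 : 1 <= mu.
  rewrite /mu -(mulfV (lt0r_neq0 l0)) ler_pM2l //.
  exact: (le_trans (ltW hN) (PX_ge N)).
have mu0 : 0 <= mu by apply: le_trans mu1.
pose M := Num.Def.archi_bound mu.
have hM : mu < M%:R by apply: archi_boundP.
have exQ : exists j, (fun j => P ^+ j <= mu) j by exists 0%N; rewrite expr0.
have ubQ : forall j, (fun j => P ^+ j <= mu) j -> (j <= M)%N.
  move=> j /= hj; rewrite -(ler_eXn2l P_gt1).
  apply: le_trans hj _; apply: ltW; exact: (lt_le_trans hM (PX_ge M)).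
case: (ex_maxnP exQ ubQ) => m /= hm mmax.
exists N, m, (mu / P ^+ m); split; last by rewrite mulfVK ?PX_neq0.
apply/andP; split; first by rewrite ler_pdivlMr ?PX_gt0 // mul1r.
rewrite ltr_pdivrMr ?PX_gt0 //.
have : ~~ (P ^+ m.+1 <= mu) by apply/negP => /mmax; rewrite ltnn.
by rewrite -ltNge exprS mulrC.
Qed.

Lemma unique_rep (a b : R) n m : 1 <= a < P -> 1 <= b < P ->
  a * P ^+ n = b * P ^+ m -> a = b.
Proof.
have key : forall (a b : R) n m, 1 <= a < P -> 1 <= b < P ->
    a * P ^+ n = b * P ^+ m -> ~ (n < m)%N.
  move=> a' b' n' m' /andP[a1 aP] /andP[b1 bP] e nm.
  have h1 : a' * P ^+ n' < P ^+ n'.+1.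
    by rewrite exprS ltr_pM2r ?PX_gt0.
  have h2 : P ^+ n'.+1 <= b' * P ^+ m'.
    apply: (le_trans _ (_ : P ^+ m' <= _)); first by rewrite (ler_eXn2l P_gt1).
    by have := PX_gt0 m'; nra.
  by move: (lt_le_trans h1 h2); rewrite e ltxx.
move=> ha hb e.
case: (ltngtP n m) => nm.
- by case: (key _ _ _ _ ha hb e nm).
- by case: (key _ _ _ _ hb ha (esym e) nm).
- by move: e; rewrite nm => /(mulIf (PX_neq0 m)).
Qed.

Lemma tmono (t : nat -> R) k : (forall i, (i < k)%N -> t i < t i.+1) ->
  forall i j, (i < j)%N -> (j <= k)%N -> t i < t j.
Proof.
move=> ht i; elim=> [//|j IH] ij jk.
move: ij; rewrite ltnS leq_eqVlt => /orP[/eqP ->|ij]; first exact: ht.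
by apply: lt_trans (IH ij (ltnW jk)) (ht _ jk).
Qed.

Lemma locate (t : nat -> R) k (l : R) : t 0%N = 1 -> t k = P ->
  (forall i, (i < k)%N -> t i < t i.+1) -> 1 <= l < P ->
  (exists2 i, (i < k)%N & l = t i) \/ (exists2 i, (i < k)%N & t i < l < t i.+1).
Proof.
move=> t0 tk ht /andP[l1 lP].
have exQ : exists i, (fun i => (i <= k)%N && (t i <= l)) i by exists 0%N; rewrite t0 l1.
have ubQ : forall i, (fun i => (i <= k)%N && (t i <= l)) i -> (i <= k)%N.
  by move=> i /andP[].
case: (ex_maxnP exQ ubQ) => i /andP[ik til] imax.
have ik' : (i < k)%N.
  rewrite ltn_neqAle ik andbT; apply/eqP => ei.
  by move: til; rewrite ei tk leNgt lP.
have lt1 : l < t i.+1.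
  rewrite ltNge; apply/negP => h.
  by have := imax i.+1; rewrite ik' h ltnn => /(_ isT).
move: til; rewrite le_eqVlt => /orP[/eqP e|lt0].
- by left; exists i.
- by right; exists i => //; rewrite lt0 lt1.
Qed.


Arguments chi_transfer {l l' x}.
Arguments Hp_add {x y}.
Arguments Hp_opp {x}.
Arguments Hp_mulP {x}.
Arguments Hp_scale {x}.
Arguments tmono {t k}.
Arguments lamH_spec {H}.
Arguments Ord_val {f l a b}.
Arguments locate {t k l}.
Arguments unique_rep {a b n m}.
Arguments reduce {l}.
Arguments scaled_eq {l l' n m}.

Lemma sum_chi (yy : nat -> R) n : (forall i, (i < n)%N -> Hp p (yy i)) ->
  ((\sum_(i < n) chi p (yy i)) %% d)%Z = chi p (\sum_(i < n) yy i) /\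
  Hp p (\sum_(i < n) yy i).
Proof.
elim: n => [|n IH] hyy.
  by rewrite !big_ord0 mod0z chi0; split => //; exists 0, 0%N; rewrite mul0r.
have [IH1 IH2] := IH (fun i lt => hyy i (ltnW lt)).
have hn := hyy n (ltnSn n).
rewrite !big_ord_recr /=.
have [h1 h2] := Hp_add IH2 hn.
split => //.
by rewrite h2 -[LHS]modzDml IH1.
Qed.

Lemma andP_conj (a b : bool) : a -> b -> a && b.
Proof. by move=> -> ->. Qed.
Arguments andP_conj {a b}.

Lemma part2 (f : R -> R) : inK p f -> is_divisor p (principal_div p f) ->
  (chiDiv p (principal_div p f) %% d)%Z = 0.
Proof.
move=> hf [hdiv [hoff hfin]].
have [hcont [hpw hper]] := hf.
case: (hpw 1 P ltr01 (ltW P_gt1)) => k [t [t0 [tk [tinc hpieces]]]].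
have hcd : forall i, exists cd : R * R, (i < k)%N -> Hp p cd.1 /\
    (forall x, t i <= x <= t i.+1 -> f x = cd.1 * x + cd.2).
  move=> i; case: (ltnP i k) => ik; last by exists (0, 0).
  by case: (hpieces i ik) => c [dd [hc hx]]; exists (c, dd).
case: (choice hcd) => cdf hcdf.
pose c i := (cdf i).1.
have hc i : (i < k)%N -> Hp p (c i) := fun ik => (hcdf i ik).1.
have hx i : (i < k)%N -> forall x, t i <= x <= t i.+1 -> f x = c i * x + (cdf i).2 :=
  fun ik => (hcdf i ik).2.
have tm := tmono tinc.
have k0 : (0 < k)%N.
  rewrite lt0n; apply/eqP => k0; move: tk; rewrite k0 t0 => h.
  by move: P_gt1; rewrite -h ltxx.
have kk : (k.-1 < k)%N by rewrite ltn_predL.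
have tge1 i : (i <= k)%N -> 1 <= t i.
  case: i => [|i] ik; first by rewrite t0.
  by rewrite -t0; apply/ltW/tm.
have tltP i : (i < k)%N -> t i < P by move=> ik; rewrite -tk; exact: tm ik (leqnn k).
have tgt0 i : (i <= k)%N -> 0 < t i := fun ik => lt_le_trans ltr01 (tge1 i ik).
pose y i := if i == 0%N then c 0%N - P * c k.-1 else c i - c i.-1.
have hy i : (i < k)%N -> Hp p (y i).
  move=> ik; rewrite /y; case: eqP => [_|i0].
  - exact: (Hp_add (hc 0%N k0) (Hp_opp (Hp_mulP (hc k.-1 kk)))).1.
  - exact: (Hp_add (hc i ik) (Hp_opp (hc i.-1 (leq_ltn_trans (leq_pred i) ik)))).1.
have Ordt i : (i < k)%N -> Ord f (t i) = t i * y i.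
  move=> ik.
  have ti0 := tgt0 i (ltnW ik).
  have hr := @right_cvg f (t i) (c i) (cdf i).2 (t i.+1 - t i) ti0.
  have {}hr : Qd f (t i) e @[e --> 0^'+] --> c i * t i.
    apply: hr; first by rewrite subr_gt0 tinc.
    by move=> z; rewrite addrC subrK; exact: hx.
  case: (posnP i) => [i0|ipos].
  - subst i.
    have hl : Qd f (t 0%N) e @[e --> 0^'-] --> (P * c k.-1) * t 0%N.
      apply: (@left_cvg f (t 0%N) (P * c k.-1) (cdf k.-1).2 ((P - t k.-1) / P) ti0).
        by rewrite divr_gt0 ?P_gt0 // subr_gt0 tltP.
      move=> z /andP[z1 z2].
      have tk1 := tgt0 k.-1 (ltnW kk).
      have Pp := P_gt0.
      have e1 : (P - t k.-1) / P * P = P - t k.-1 by rewrite mulfVK // lt0r_neq0.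
      have z0 : 0 < z.
        rewrite t0 in z1; apply: lt_le_trans z1.
        rewrite subr_gt0 ltr_pdivrMr // mul1r.
        lra.
      rewrite -hper // (hx k.-1 kk); first by rewrite /c; ring.
      rewrite prednK // tk.
      rewrite t0 in z1 z2.
      move: e1 z1; set q := (P - t k.-1) / P => e1 z1.
      apply/andP; split; nra.
    rewrite (Ord_val hr hl) /y eqxx t0; ring.
  - have ipk : (i.-1 < k)%N by apply: leq_ltn_trans (leq_pred i) ik.
    have ei : i.-1.+1 = i by rewrite prednK.
    have hl : Qd f (t i) e @[e --> 0^'-] --> c i.-1 * t i.
      apply: (@left_cvg f (t i) (c i.-1) (cdf i.-1).2 (t i - t i.-1) ti0).
        by rewrite subr_gt0 -{2}ei tinc.
      move=> z; rewrite opprB addrC subrK => hz; apply: hx => //.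
      by rewrite ei.
    rewrite (Ord_val hr hl) /y (negbTE (lt0n_neq0 ipos)); ring.
have Ordo i l : (i < k)%N -> t i < l < t i.+1 -> Ord f l = 0.
  move=> ik /andP[l1 l2].
  have l0 : 0 < l := lt_trans (tgt0 i (ltnW ik)) l1.
  have hr : Qd f l e @[e --> 0^'+] --> c i * l.
    apply: (@right_cvg f l (c i) (cdf i).2 (t i.+1 - l) l0); first by rewrite subr_gt0.
    move=> z; rewrite addrC subrK => /andP[z1 z2]; apply: hx => //.
    by rewrite z2 andbT; apply: le_trans z1; apply: ltW.
  have hl : Qd f l e @[e --> 0^'-] --> c i * l.
    apply: (@left_cvg f l (c i) (cdf i).2 (l - t i) l0); first by rewrite subr_gt0.
    move=> z; rewrite opprB addrC subrK => /andP[z1 z2]; apply: hx => //.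
    by rewrite z1 /=; apply: le_trans z2 _; apply: ltW.
  by rewrite (Ord_val hr hl) subrr.
have Dval H : Cp p H -> principal_div p f H = Ord f (lamH p H).
  by move=> hH; rewrite /principal_div asboolT.
pose g i := scaledHp p (t i).
have hsub : [set H | principal_div p f H != 0] `<=` g @` `I_k.
  move=> H /= hS.
  have hH : Cp p H.
    by case: (pselect (Cp p H)) => // nC; move: hS; rewrite hoff // eqxx.
  case: (lamH_spec hH) => L0 HL.
  case: (reduce L0) => n [m [l' [hl' e]]].
  have l'0 : 0 < l' by case/andP: hl' => h _; exact: lt_le_trans ltr01 h.
  move: hS; rewrite Dval // (Ord_scale hf L0 l'0 e).
  case: (locate t0 tk tinc hl') => [[i ik el]|[i ik hi]]; last by rewrite (Ordo i l' ik hi) eqxx.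
  move=> _; exists i => //; rewrite /g HL -el; apply: esym; exact: scaled_eq L0 l'0 e.
have hzero : g @` `I_k `\` [set H | principal_div p f H != 0] `<=`
    (fun H => chiH p H (principal_div p f H)) @^-1` [set 0].
  move=> H [_ /= hS]; move/negP: hS; rewrite negbK => /eqP ->.
  by rewrite /chiH mulr0 chi0.
have hinj : set_inj `I_k g.
  move=> a b /set_mem /= ak /set_mem /= bk eab.
  case: (scaled_rel (tgt0 a (ltnW ak)) (tgt0 b (ltnW bk)) eab) => n [m e].
  have ta := unique_rep (andP_conj (tge1 a (ltnW ak)) (tltP a ak)) (andP_conj (tge1 b (ltnW bk)) (tltP b bk)) e.
  case: (ltngtP a b) => // hab.
  - by move: (tm a b hab (ltnW bk)); rewrite ta ltxx.
  - by move: (tm b a hab (ltnW ak)); rewrite ta ltxx.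
rewrite /chiDiv (fsbig_widen _ _ _ hsub hzero) fsbig_image // -fsbig_ord.
rewrite (eq_bigr (fun i : 'I_k => chi p (y i))); last first.
  move=> i _; have ik := ltn_ord i.
  have Cg : Cp p (g i) by exists (t i); split => //; exact: tgt0 (ltnW ik).
  case: (lamH_spec Cg) => L0 gL.
  have ti0 := tgt0 i (ltnW ik).
  rewrite Dval //.
  case: (scaled_rel L0 ti0 (esym gL)) => n [m e].
  rewrite (Ord_scale hf L0 ti0 e) Ordt // /chiH.
  rewrite (chi_transfer L0 ti0 (esym gL)); first by rewrite mulKf // lt0r_neq0.
  by rewrite -gL; exists (y i); [exact: hy|].
have [h1 _] := sum_chi _ _ hy.
rewrite h1.
have -> : \sum_(i < k) y i = (1 - P) * c k.-1.
  rewrite -(prednK k0) big_ord_recl /=.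
  have -> : \sum_(i < k.-1) y (bump 0 i) = \sum_(i < k.-1) (c i.+1 - c i).
    by apply: eq_bigr => i _; rewrite /y /bump /= add1n.
  rewrite -(big_mkord (fun _ => true) (fun i => c i.+1 - c i)) telescope_sumr // /y eqxx.
  ring.
exact: chi_1mP (hc _ kk).
Qed.

Lemma part1 (H : set R) : Cp p H ->
     exists chiH0 : R -> int,
       (forall l : R, 0 < l -> H = scaledHp p l ->
          forall x, H x -> chiH0 x = chi p (l^-1 * x)) /\
       (forall g : R -> int,
          (forall l : R, 0 < l -> H = scaledHp p l ->
             forall x, H x -> g x = chi p (l^-1 * x)) ->
          forall x, H x -> g x = chiH0 x).
Proof.
move=> hH; case: (lamH_spec hH) => L0 HL.
exists (chiH p H); split.
- move=> l l0 Hl x Hx; rewrite /chiH.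
  apply: (chi_transfer L0 l0); first by rewrite -HL.
  by rewrite -HL.
- by move=> g hg x Hx; exact: hg (lamH p H) L0 HL x Hx.
Qed.

End S.

Theorem proposition5p5 (R : realType) (p : nat) :
  prime p ->
  (* (i) existence and uniqueness of chi_H *)
  (forall H : set R, Cp p H ->
     exists chiH0 : R -> int,
       (forall l : R, 0 < l -> H = scaledHp p l ->
          forall x, H x -> chiH0 x = chi p (l^-1 * x)) /\
       (forall g : R -> int,
          (forall l : R, 0 < l -> H = scaledHp p l ->
             forall x, H x -> g x = chi p (l^-1 * x)) ->
          forall x, H x -> g x = chiH0 x)) /\
  (* (ii) principal divisors lie in the kernel of chi : Div(C_p) -> Z/(p-1)Z *)
  (forall f : R -> R, inK p f ->
     is_divisor p (principal_div p f) ->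
     (chiDiv p (principal_div p f) %% (p.-1)%:Z)%Z = 0%Z).
Proof.
move=> hp; split.
- by move=> H hH; exact: (@part1 R p hp H hH).
- by move=> f hf hd; exact: (@part2 R p hp f hf hd).
Qed.
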